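(* For every atomic hypergraph $H$, the union of all constructions of $H$ equals the saturated closure $\bar H$ of $H$; i.e. $\bigcup\mathcal C(H)=\bar H$, where $\mathcal C(H)$ is the set of constructions of $H$.
   Context: A hypergraph is a finite set $H$ of nonempty subsets of some finite set; its carrier is $\bigcup H$. For a family $F$ and a set $Y$, $F_Y=\{X\in F\mid X\subseteq Y\}$. A hypergraph partition of $H$ is a partition $\{H_1,\dots,H_n\}$ ($n\ge0$) of the set $H$ such that $\{\bigcup H_1,\dots,\bigcup H_n\}$ is a partition of $\bigcup H$; $H$ is connected if it has exactly one hypergraph partition. Every hypergraph has a unique finest hypergraph partition, i.e. one all of whose blocks are connected. $H$ is atomic if $\{x\}\in H$ for every $x\in\bigcup H$. Constructions of an atomic hypergraph $H$ are defined by induction on $|\bigcup H|$: (0) $\emptyset$ is the only construction of the empty hypergraph; (1) if $|\bigcup H|\ge1$, $H$ is connected, $x\in\bigcup H$ and $K$ is a construction of $H_{\bigcup H\setminus\{x\}}$, then $K\cup\{\bigcup H\}$ is a construction of $H$; (2) if $H$ is not connected with finest hypergraph partition $\{H_1,\dots,H_n\}$, $n\ge2$, and $K_i$ is a construction of $H_i$ for each $i$, then $K_1\cup\dots\cup K_n$ is a construction of $H$. $H$ is saturated if $X_1,X_2\in H$ and $X_1\cap X_2\neq\emptyset$ imply $X_1\cup X_2\in H$. $Y\subseteq\bigcup H$ is dispensable in $H$ when $H_Y\setminus\{Y\}$ is a connected hypergraph with carrier $Y$; $H\cup\{Y\}$ enhances $H$ when $Y$ is dispensable in $H$ and $Y\notin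 H$; hypergraphs on the same carrier are cognate when related by the equivalence relation generated by enhancement. The saturated closure $\bar H$ of $H$ is the (unique) saturated hypergraph cognate to $H$, equal to the union of all hypergraphs cognate to $H$. *)

(* Defs.v *)
From HB Require Import structures.
From mathcomp Require Import all_boot.
From Stdlib Require Import Relations.
Set Implicit Arguments. Unset Strict Implicit. Unset Printing Implicit Defensive.

Section Hyper.
Variable T : finType.
Implicit Types (H K B : {set {set T}}) (X Y : {set T}).

Definition hypergraph H : bool := set0 \notin H.

Definition carrier H : {set T} := cover H.

Definition restrict H Y : {set {set T}} := [set X in H | X \subset Y].

(* hypergraph partition: a partition P of the set H whose blocks have
   pairwise disjoint carriers (hence the carriers partition \bigcup H) *)
Definition hpartition H (P : {set {set {set T}}}) : bool :=
  partition P H &&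
  [forall B1 in P, forall B2 in P,
     (B1 != B2) ==> [disjoint carrier B1 & carrier B2]].

Definition connected H : bool :=
  #|[set P : {set {set {set T}}} | hpartition H P]| == 1.

Definition finest_hpartition H (P : {set {set {set T}}}) : bool :=
  hpartition H P && [forall B in P, connected B].

Definition atomic H : bool := [forall x in carrier H, [set x] \in H].

Inductive construction : {set {set T}} -> {set {set T}} -> Prop :=
| constr_empty : construction set0 set0
| constr_conn : forall H x K,
    atomic H -> carrier H != set0 -> connected H -> x \in carrier H ->
    construction (restrict H (carrier H :\ x)) K ->
    construction H (K :|: [set carrier H])
| constr_disc : forall H (P : {set {set {set T}}}) (Ks : {set {set T}} -> {set {set T}}),
    atomic H -> ~~ connected H -> finest_hpartition H P -> 1 < #|P| ->
    (forall B, B \in P -> construction B (Ks B)) ->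
    construction H (\bigcup_(B in P) Ks B).

Definition saturated H : bool :=
  [forall X1 in H, forall X2 in H,
     (X1 :&: X2 != set0) ==> (X1 :|: X2 \in H)].

Definition dispensable H Y : bool :=
  (Y \subset carrier H) && connected (restrict H Y :\ Y)
  && (carrier (restrict H Y :\ Y) == Y).

(* H2 = H1 ∪ {Y} enhances H1 (Y nonempty, so H2 is again a hypergraph) *)
Definition enhances (H1 H2 : {set {set T}}) : Prop :=
  exists Y, [/\ Y != set0, dispensable H1 Y, Y \notin H1 & H2 = H1 :|: [set Y]].

Definition cognate : relation {set {set T}} := clos_refl_sym_trans _ enhances.

End Hyper.

(* Main.v *)
Require Import Defs.
From HB Require Import structures.
From mathcomp Require Import all_boot.
From Stdlib Require Import Relations.
Set Implicit Arguments. Unset Strict Implicit. Unset Printing Implicit Defensive.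

Section Basic.
Variable T : finType.
Implicit Types (H K F G A B : {set {set T}}) (X Y Z W : {set T}).

Lemma carrierP H x : reflect (exists2 Z, Z \in H & x \in Z) (x \in carrier H).
Proof. exact: bigcupP. Qed.

Lemma sub_carrier H Z : Z \in H -> Z \subset carrier H.
Proof. exact: bigcup_sup. Qed.

Lemma carrierS H K : H \subset K -> carrier H \subset carrier K.
Proof.
move=> sHK; apply/subsetP=> x /carrierP [Z ZH xZ].
apply/carrierP; exists Z => //; exact: (subsetP sHK).
Qed.

Lemma carrier_min H Y : (forall Z, Z \in H -> Z \subset Y) -> carrier H \subset Y.
Proof. by move=> h; apply/bigcupsP. Qed.

Lemma carrier_set1 X : carrier [set X] = X.
Proof. exact: cover1. Qed.

Lemma carrierU1 X H : carrier (X |: H) = X :|: carrier H.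
Proof.
apply/setP=> x; rewrite inE; apply/carrierP/orP.
  by case=> Z; rewrite in_setU1 => /orP [/eqP-> | ZH] xZ; [left | right; apply/carrierP; exists Z].
case=> [xX | /carrierP [Z ZH xZ]]; first by exists X; rewrite ?in_setU1 ?eqxx.
by exists Z; rewrite // in_setU1 ZH orbT.
Qed.

Lemma carrier0 : carrier (set0 : {set {set T}}) = set0.
Proof. by apply/setP=> x; rewrite inE; apply/carrierP=> [[Z]]; rewrite inE. Qed.

Lemma restrictE H Y Z : (Z \in restrict H Y) = (Z \in H) && (Z \subset Y).
Proof. by rewrite /restrict inE. Qed.

Lemma restrict_sub H Y : restrict H Y \subset H.
Proof. by apply/subsetP=> Z; rewrite restrictE => /andP[]. Qed.

Lemma carrier_restrict H Y : carrier (restrict H Y) \subset Y.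
Proof. by apply: carrier_min=> Z; rewrite restrictE => /andP[]. Qed.

Lemma restrict_restrict H Y Z : Y \subset Z -> restrict (restrict H Z) Y = restrict H Y.
Proof.
move=> sYZ; apply/setP=> W; rewrite !restrictE.
by case: (W \subset Y) /idP => [sWY|]; rewrite ?andbF ?andbT // (subset_trans sWY sYZ) andbT.
Qed.

Lemma restrict_carrier H : restrict H (carrier H) = H.
Proof.
by apply/setP=> W; rewrite restrictE; case WH: (W \in H); rewrite //= sub_carrier.
Qed.

Lemma disjP X Y : reflect (forall x, x \in X -> x \in Y -> False) [disjoint X & Y].
Proof.
rewrite -setI_eq0; apply: (iffP eqP) => [h x xX xY | h].
  have xXY : x \in X :&: Y by rewrite inE xX xY.
  by rewrite h inE in xXY.
by apply/setP=> x; rewrite !inE; apply/andP=> [[/h]].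
Qed.
Lemma setUD_sub X Y : X \subset Y -> X :|: Y :\: X = Y.
Proof.
move=> sXY; apply/setP=> x; rewrite !inE.
by case xX: (x \in X); rewrite //= (subsetP sXY).
Qed.
End Basic.

Section Aux.
Variable T : finType.
Implicit Types (H K F G A B : {set {set T}}) (X Y Z W : {set T}) (P : {set {set {set T}}}).

Definition nosplit H := forall A, A \subset H ->
  [disjoint carrier A & carrier (H :\: A)] -> A = set0 \/ A = H.

Lemma disj_nonempty X Y : X != set0 -> X \subset Y -> ~~ [disjoint X & Y].
Proof.
case/set0Pn=> x xX sXY; by apply/negP=> /disjP/(_ x xX (subsetP sXY x xX)).
Qed.


Lemma coverE (P : {set {set {set T}}}) : cover P = carrier P.
Proof. by []. Qed.

Lemma hpart_sub P H B : hpartition H P -> B \in P -> B \subset H.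
Proof.
case/andP=> /and3P [/eqP <- _ _] _ BP; rewrite coverE; exact: sub_carrier.
Qed.

Lemma hpart_cover P H Z : hpartition H P -> Z \in H -> exists2 B, B \in P & Z \in B.
Proof.
case/andP=> /and3P [/eqP <- _ _] _; rewrite coverE; exact/carrierP.
Qed.

Lemma hpart_disj P H B1 B2 : hpartition H P -> B1 \in P -> B2 \in P -> B1 != B2 ->
  [disjoint carrier B1 & carrier B2].
Proof.
case/andP=> _ /forall_inP h B1P B2P ne.
by move: (h B1 B1P) => /forall_inP/(_ B2 B2P)/implyP/(_ ne).
Qed.

Lemma hpart_set0 P H : hpartition H P -> set0 \notin P.
Proof. by case/andP=> /and3P []. Qed.

Lemma hpart_splitD P H B : hpartition H P -> B \in P ->
  [disjoint carrier B & carrier (H :\: B)].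
Proof.
move=> hP BP; apply/disjP=> x xB /carrierP [W]; rewrite inE => /andP [WnB WH] xW.
have [B' B'P WB'] := hpart_cover hP WH.
have neq : B != B' by apply: contraNneq WnB => ->.
move: (hpart_disj hP BP B'P neq) => /disjP/(_ x xB); apply.
by apply/carrierP; exists W.
Qed.

Lemma hpartitionI H P : cover P = H -> trivIset P -> set0 \notin P ->
  (forall B1 B2, B1 \in P -> B2 \in P -> B1 != B2 -> [disjoint carrier B1 & carrier B2]) ->
  hpartition H P.
Proof.
move=> cP tP P0 h; apply/andP; split; first by rewrite /partition cP eqxx tP P0.
apply/forall_inP=> B1 B1P; apply/forall_inP=> B2 B2P; apply/implyP; exact: h.
Qed.

Definition T0 H : {set {set {set T}}} := if H == set0 then set0 else [set H].

Lemma hpart_T0 H : hpartition H (T0 H).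
Proof.
rewrite /T0; case: eqP => [->|/eqP H0].
  apply: hpartitionI; rewrite ?inE //.
  - by rewrite coverE carrier0.
  - by apply/trivIsetP=> ?; rewrite inE.
  - by move=> ?; rewrite inE.
apply: hpartitionI.
- by rewrite cover1.
- by apply/trivIsetP=> B1 B2; rewrite !inE => /eqP-> /eqP->; rewrite eqxx.
- by rewrite inE eq_sym.
by move=> B1 B2; rewrite !inE => /eqP-> /eqP->; rewrite eqxx.
Qed.

Lemma hpart_nosplit H P : nosplit H -> hpartition H P -> P = T0 H.
Proof.
move=> ns hP.
have sub : P \subset [set H].
  apply/subsetP=> B BP; rewrite inE.
  case: (ns B (hpart_sub hP BP) (hpart_splitD hP BP)) => [B0|->//].
  by move: (hpart_set0 hP); rewrite -B0 BP.
move: sub; rewrite subset1 => /orP [/eqP PH | /eqP P0].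
  have H0 : H != set0 by apply: contraNneq (hpart_set0 hP) => <-; rewrite PH inE.
  by rewrite /T0 (negbTE H0).
move: hP; rewrite P0 => /andP [/and3P [/eqP cH _ _] _].
by rewrite /T0 -cH coverE carrier0 eqxx.
Qed.

Lemma connectedP H : connected H <-> nosplit H.
Proof.
split.
  rewrite /connected => /cards1P [P0 eP] A sAH dA.
  have T0P : T0 H \in [set P | hpartition H P] by rewrite inE hpart_T0.
  rewrite eP inE in T0P.
  case: (A =P set0) => [-> | /eqP A0]; first by left.
  case: (A =P H) => [-> | /eqP AH]; first by right.
  exfalso.
  have DA0 : H :\: A != set0.
    apply: contra AH => /eqP D0; rewrite eqEsubset sAH /=.
    apply/subsetP=> Z ZH; apply: contraT=> ZA.
    have ZD : Z \in H :\: A by rewrite inE ZA ZH.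
    by rewrite D0 inE in ZD.
  have h2 : hpartition H [set A; H :\: A].
    apply: hpartitionI.
    - apply/setP=> Z; apply/bigcupP/idP => [[B]|ZH].
        by rewrite !inE => /orP [/eqP-> | /eqP->]; [move/(subsetP sAH) | rewrite inE => /andP[]].
      case ZA: (Z \in A); first by exists A; rewrite ?inE ?eqxx.
      by exists (H :\: A); rewrite !inE ?eqxx ?orbT // ZA ZH.
    - apply/trivIsetP=> B1 B2; rewrite !inE => /orP [/eqP-> | /eqP->] /orP [/eqP-> | /eqP->];
        rewrite ?eqxx // => _; apply/disjP=> Z; rewrite !inE.
        by move=> ZA /andP [/negP].
      by move=> /andP [/negP nZ _] /nZ.
    - by rewrite !inE !(eq_sym set0) negb_or A0 DA0.
    move=> B1 B2; rewrite !inE => /orP [/eqP-> | /eqP->] /orP [/eqP-> | /eqP->];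
      rewrite ?eqxx // => _; by rewrite // disjoint_sym.
  have : [set A; H :\: A] \in [set P | hpartition H P] by rewrite inE.
  rewrite eP inE => /eqP e2.
  move: T0P; rewrite -e2 /T0; have H0 : H != set0.
    by apply: contra A0 => /eqP H0; rewrite -subset0 -H0.
  by rewrite (negbTE H0) => /eqP /setP /(_ A); rewrite !inE eqxx /= (negbTE AH).
move=> ns; rewrite /connected; apply/cards1P; exists (T0 H); apply/setP=> P; rewrite !inE.
apply/idP/eqP => [hP | ->]; [exact: hpart_nosplit | exact: hpart_T0].
Qed.


Lemma meetP X Y : ~~ [disjoint X & Y] -> exists2 x, x \in X & x \in Y.
Proof. by rewrite -setI_eq0 => /set0Pn [x]; rewrite inE => /andP [] ; exists x. Qed.

Lemma nosplit_hub F G : nosplit G -> G \subset F ->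
  (forall W, W \in F -> ~~ [disjoint W & carrier G]) -> nosplit F.
Proof.
move=> nsG sGF hW A sAF dA.
have sD : G :\: (G :&: A) \subset F :\: A.
  apply/subsetP=> Z; rewrite !inE => /andP [ZnGA ZG].
  by rewrite (subsetP sGF Z ZG) andbT; apply: contra ZnGA => ZA; rewrite ZG ZA.
have [GA0 | GAG] := nsG (G :&: A) (subsetIl _ _)
  (disjointW (carrierS (subsetIr G A)) (carrierS sD) dA).
- left; apply/eqP; rewrite -subset0; apply/subsetP=> W WA.
  have [x xW xG] := meetP (hW W (subsetP sAF W WA)).
  have xA : x \in carrier A by apply/carrierP; exists W.
  have sGD : G \subset F :\: A.
    apply/subsetP=> Z ZG; rewrite inE (subsetP sGF Z ZG) andbT.
    apply/negP=> ZA; have : Z \in G :&: A by rewrite inE ZG ZA.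
    by rewrite GA0 inE.
  have xD : x \in carrier (F :\: A) by apply: (subsetP (carrierS sGD)).
  by case: (disjP _ _ dA x xA xD).
- right; apply/eqP; rewrite eqEsubset sAF /=; apply/subsetP=> W WF.
  apply: contraT=> WnA.
  have [x xW xG] := meetP (hW W WF).
  have sGA : G \subset A by rewrite -GAG subsetIr.
  have xA : x \in carrier A by apply: (subsetP (carrierS sGA)).
  have xD : x \in carrier (F :\: A) by apply/carrierP; exists W; rewrite // inE WnA WF.
  by case: (disjP _ _ dA x xA xD).
Qed.

Lemma nosplit1 X : nosplit [set X].
Proof.
move=> A; rewrite subset1 => /orP [/eqP-> | /eqP->] _; by [right | left].
Qed.

Lemma nosplit_remove F G Y : nosplit G -> G \subset F -> carrier G = Y ->
  Y \notin F -> nosplit (Y |: F) -> nosplit F.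
Proof.
move=> nsG sGF cG YF ns A sAF dA.
have sD : G :\: (G :&: A) \subset F :\: A.
  apply/subsetP=> Z; rewrite !inE => /andP [ZnGA ZG].
  by rewrite (subsetP sGF Z ZG) andbT; apply: contra ZnGA => ZA; rewrite ZG ZA.
have [GA0 | GAG] := nsG (G :&: A) (subsetIl _ _)
  (disjointW (carrierS (subsetIr G A)) (carrierS sD) dA).
- have sGD : G \subset F :\: A.
    apply/subsetP=> Z ZG; rewrite inE (subsetP sGF Z ZG) andbT.
    apply/negP=> ZA; have : Z \in G :&: A by rewrite inE ZG ZA.
    by rewrite GA0 inE.
  have sA : A \subset Y |: F by apply: subset_trans sAF (subsetUr _ _).
  have dA' : [disjoint carrier A & carrier ((Y |: F) :\: A)].
    apply: disjointWr dA; apply: carrier_min=> W; rewrite !inE => /andP [WnA /orP [/eqP-> | WF]].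
      by rewrite -cG; apply: carrierS.
    by apply: sub_carrier; rewrite inE WnA WF.
  case: (ns A sA dA') => [->|AF]; first by left.
  have : Y \in A by rewrite AF setU11.
  by move/(subsetP sAF); rewrite (negbTE YF).
- have sGA : G \subset A by rewrite -GAG subsetIr.
  have sA : Y |: A \subset Y |: F by apply: setUS.
  have dA' : [disjoint carrier (Y |: A) & carrier ((Y |: F) :\: (Y |: A))].
    rewrite carrierU1; apply: disjointW dA.
      by apply/subsetP=> x; rewrite inE => /orP [|//]; rewrite -cG; apply: (subsetP (carrierS sGA)).
    apply: carrierS; apply/subsetP=> W; rewrite !inE negb_or => /andP [/andP [WnY WnA]].
    by rewrite (negbTE WnY) /= => WF; rewrite WnA WF.
  case: (ns _ sA dA') => [/setP /(_ Y) | e]; first by rewrite !inE eqxx.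
  right; apply/eqP; rewrite eqEsubset sAF /=; apply/subsetP=> W WF.
  have : W \in Y |: A by rewrite e inE WF orbT.
  rewrite in_setU1 => /orP [/eqP WY | //]; by move: YF; rewrite -WY WF.
Qed.


Definition Dset H X := [/\ X != set0, nosplit (restrict H X) & carrier (restrict H X) = X].

Lemma hyp_nonempty H W : hypergraph H -> W \in H -> W != set0.
Proof. by move=> hH WH; apply: contraNneq hH => <-. Qed.

Lemma sat_D H X : hypergraph H -> saturated H -> (X \in H <-> Dset H X).
Proof.
move=> hH sH; split=> [XH | [X0 ns cX]].
  have XR : X \in restrict H X by rewrite restrictE XH subxx.
  split; first exact: hyp_nonempty hH XH.
    apply: (nosplit_hub (@nosplit1 X)).
    - by rewrite sub1set.
    - move=> W; rewrite restrictE carrier_set1 => /andP [WH sWX].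
      exact: disj_nonempty (hyp_nonempty hH WH) sWX.
  apply/eqP; rewrite eqEsubset carrier_restrict; exact: sub_carrier.
set F := restrict H X.
have [Z ZF] : exists Z, Z \in F.
  move: X0; rewrite -cX => /set0Pn [x /carrierP [Z ZF _]]; by exists Z.
case: (@arg_maxnP _ Z (mem F) (fun M => #|M|) ZF) => M MF0 Mmax.
have MF : M \in F by exact: MF0.
set A := [set W in F | W \subset M].
have sAF : A \subset F by apply/subsetP=> W; rewrite inE => /andP[].
have MA : M \in A by rewrite inE MF subxx.
have dA : [disjoint carrier A & carrier (F :\: A)].
  apply: (@disjointW _ _ M _ (~: M)).
  - by apply: carrier_min=> W; rewrite inE => /andP[].
  - apply: carrier_min=> W; rewrite !inE => /andP [WnA WF].
    apply/subsetP=> x xW; rewrite inE; apply/negP=> xM.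
    move: (WF) (MF); rewrite /F restrictE => /andP [WH sWX] /andP [MH sMX].
    have MWH : M :|: W \in H.
      move/forall_inP: sH => /(_ M MH) /forall_inP /(_ W WH) /implyP; apply.
      by apply/set0Pn; exists x; rewrite inE xM xW.
    have MWF : M :|: W \in F by rewrite /F restrictE MWH subUset sMX sWX.
    have le : #|M :|: W| <= #|M| := Mmax _ MWF.
    move: le; rewrite leqNgt => /negP lt.
    case: (boolP (W \subset M)) => [sWM | nWM].
      by move: WnA; rewrite WH sWX sWM.
    exfalso; apply: lt; apply: proper_card; rewrite properUl //.
  - by apply/disjP=> x xM; rewrite inE xM.
case: (ns A sAF dA) => [A0 | AF]; first by move: MA; rewrite A0 inE.
have sXM : X \subset M by rewrite -cX -AF; apply: carrier_min=> W; rewrite inE => /andP[].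
have -> : X = M.
  apply/eqP; rewrite eqEsubset sXM /=; by move: MF; rewrite restrictE => /andP[].
by move: MF; rewrite restrictE => /andP[].
Qed.


Lemma enh_D H1 Y X : hypergraph H1 -> Y != set0 -> dispensable H1 Y -> Y \notin H1 ->
  (Dset H1 X <-> Dset (H1 :|: [set Y]) X).
Proof.
move=> hH Y0 /andP [/andP [sY cn] /eqP cY] YH.
have eG : restrict H1 Y :\ Y = restrict H1 Y.
  apply/setP=> W; rewrite in_setD1; case: eqP => // ->.
  by rewrite restrictE (negbTE YH).
rewrite eG in cn cY; move/connectedP: cn => nsG.
case: (boolP (Y \subset X)) => sYX.
  have eR : restrict (H1 :|: [set Y]) X = Y |: restrict H1 X.
    apply/setP=> W; rewrite in_setU1 !restrictE in_setU in_set1.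
    by case: eqP => [->|]; rewrite ?sYX ?orbT ?orbF.
  have sGF : restrict H1 Y \subset restrict H1 X.
    by apply/subsetP=> W; rewrite !restrictE => /andP [-> /subset_trans ->].
  have cGF : Y \subset carrier (restrict H1 X) by rewrite -{1}cY; apply: carrierS.
  have cE : carrier (Y |: restrict H1 X) = carrier (restrict H1 X).
    by rewrite carrierU1; apply/setUidPr.
  rewrite /Dset eR cE; split => [[X0 ns cX] | [X0 ns cX]]; split => //.
    apply: (nosplit_hub ns); first exact: subsetUr.
    move=> W; rewrite in_setU1 => /orP [/eqP-> | WF]; first exact: disj_nonempty Y0 cGF.
    apply: disj_nonempty; last exact: sub_carrier.
    by apply: (hyp_nonempty hH); move: WF; rewrite restrictE => /andP[].
  apply: (nosplit_remove nsG sGF cY) => //.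
  by rewrite restrictE (negbTE YH).
rewrite /Dset; have -> // : restrict (H1 :|: [set Y]) X = restrict H1 X.
apply/setP=> W; rewrite !restrictE in_setU in_set1.
by case: eqP => [->|]; rewrite ?(negbTE sYX) ?andbF ?orbF.
Qed.

Definition Qrel (H1 H2 : {set {set T}}) :=
  (hypergraph H1 <-> hypergraph H2) /\ (hypergraph H1 -> forall X, Dset H1 X <-> Dset H2 X).

Lemma cognate_Q H1 H2 : cognate H1 H2 -> Qrel H1 H2.
Proof.
elim=> {H1 H2} [H1 H2 [Y [Y0 dY YH ->]] | H1 | H1 H2 _ [h1 h2] | H1 H2 H3 _ [a1 a2] _ [b1 b2]].
- split.
    by rewrite /hypergraph in_setU in_set1 negb_or eq_sym Y0 andbT.
  move=> hH X; exact: enh_D.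
- by split => // _ X.
- split; first exact: iff_sym h1.
  move=> hH2 X; exact: iff_sym (h2 (proj2 h1 hH2) X).
- split; first exact: iff_trans a1 b1.
  move=> hH1 X; exact: iff_trans (a2 hH1 X) (b2 (proj1 a1 hH1) X).
Qed.


Lemma sat_step H : hypergraph H -> ~~ saturated H ->
  exists Y, [/\ Y != set0, dispensable H Y & Y \notin H].
Proof.
move=> hH /forall_inPn [X1 X1H /forall_inPn [X2 X2H]].
rewrite negb_imply => /andP [m nU].
have X10 := hyp_nonempty hH X1H.
have X20 := hyp_nonempty hH X2H.
set Y := X1 :|: X2.
have eG : restrict H Y :\ Y = restrict H Y.
  apply/setP=> W; rewrite in_setD1; case: eqP => // ->.
  by rewrite restrictE (negbTE nU).
have cG2 : carrier [set X1; X2] = Y by rewrite carrierU1 carrier_set1.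
have ns2 : nosplit [set X1; X2].
  apply: (nosplit_hub (@nosplit1 X1)); first by rewrite sub1set setU11.
  move=> W; rewrite in_setU1 in_set1 carrier_set1 => /orP [/eqP-> | /eqP->].
    exact: disj_nonempty X10 (subxx _).
  by rewrite disjoint_sym -setI_eq0.
have sG2 : [set X1; X2] \subset restrict H Y.
  by rewrite subUset !sub1set !restrictE X1H X2H subsetUl subsetUr.
exists Y; split => //.
  by apply: contraNneq X10 => Y0; rewrite -subset0 -Y0 subsetUl.
rewrite /dispensable eG; apply/andP; split; [apply/andP; split|].
- by rewrite subUset !sub_carrier.
- apply/connectedP; apply: (nosplit_hub ns2 sG2) => W; rewrite restrictE cG2 => /andP [WH sWY].
  exact: disj_nonempty (hyp_nonempty hH WH) sWY.
rewrite eqEsubset carrier_restrict /= -{1}cG2; exact: carrierS.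
Qed.

Lemma sat_exists n H : #|~: H| <= n -> hypergraph H ->
  exists Hb, saturated Hb /\ cognate H Hb.
Proof.
elim: n H => [|n IH] H cH hH;
  (case: (boolP (saturated H)) => [sH | nsH]; first by exists H; split => //; apply: rst_refl);
  have [Y [Y0 dY YH]] := sat_step hH nsH.
  have : 0 < #|~: H| by apply/card_gt0P; exists Y; rewrite inE.
  by rewrite leqNgt in cH; rewrite (negbTE cH).
have pr : ~: (H :|: [set Y]) \proper ~: H.
  apply/properP; split; first by rewrite setCS subsetUl.
  by exists Y; rewrite !inE ?eqxx ?orbT.
have hH' : hypergraph (H :|: [set Y]).
  by rewrite /hypergraph in_setU in_set1 negb_or eq_sym Y0 andbT.
have [Hb [sHb cHb]] := IH _ (leq_trans (proper_card pr) cH) hH'.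
exists Hb; split => //; apply: rst_trans cHb; apply: rst_step.
by exists Y; split.
Qed.


Lemma hyp_sub H K : K \subset H -> hypergraph H -> hypergraph K.
Proof. by move=> sKH; apply: contra; apply: (subsetP sKH). Qed.

Lemma Dset_restrict H Z X : Dset (restrict H Z) X -> Dset H X.
Proof.
case=> X0 ns cX.
have sXZ : X \subset Z.
  rewrite -cX; apply: subset_trans (carrier_restrict H Z).
  by apply: carrierS; apply: restrict_sub.
by rewrite restrict_restrict // in ns cX.
Qed.

Lemma blk_restrict H P B X : hypergraph H -> hpartition H P -> B \in P ->
  X \subset carrier B -> restrict H X = restrict B X.
Proof.
move=> hH hP BP sX; apply/setP=> W; rewrite !restrictE.
case WB: (W \in B); first by rewrite (subsetP (hpart_sub hP BP)).
case WH: (W \in H) => //=; apply/negP=> sWX.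
have [B' B'P WB'] := hpart_cover hP WH.
have neq : B != B' by apply: contraFneq WB => ->.
have [x xW] := set0Pn _ (hyp_nonempty hH WH).
move: (hpart_disj hP BP B'P neq) => /disjP/(_ x).
apply; first by apply: (subsetP sX); apply: (subsetP sWX).
by apply/carrierP; exists W.
Qed.

Lemma Dset_block H P B X : hypergraph H -> hpartition H P -> B \in P ->
  Dset B X -> Dset H X.
Proof.
move=> hH hP BP [X0 ns cX].
have sX : X \subset carrier B by rewrite -cX; apply: carrierS; apply: restrict_sub.
by rewrite /Dset (blk_restrict hH hP BP sX).
Qed.

Lemma constr_sound H C : construction H C -> hypergraph H -> forall X, X \in C -> Dset H X.
Proof.
elim=> {H C} [|H x K aH cH0 cH xH cK IH|H P Ks aH ncH fP P1 cKs IH] hH X.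
- by rewrite inE.
- rewrite in_setU in_set1 => /orP [XK | /eqP ->].
    apply: (@Dset_restrict _ (carrier H :\ x)); apply: IH => //.
    exact: hyp_sub (restrict_sub _ _) hH.
  rewrite /Dset restrict_carrier; split => //; exact/connectedP.
- move=> /bigcupP [B BP XK]; case/andP: fP => hP _.
  apply: (Dset_block hH hP BP); apply: IH => //.
  exact: hyp_sub (hpart_sub hP BP) hH.
Qed.



Lemma blk_notin H P B A : hypergraph H -> hpartition H P -> B \in P ->
  A \subset B -> A != set0 -> A != B -> A \notin P.
Proof.
move=> hH hP BP sAB A0 AB; apply/negP=> AP.
have [W WA] := set0Pn _ A0.
have WH : W \in H by apply: (subsetP (hpart_sub hP BP)); apply: (subsetP sAB).
have [x xW] := set0Pn _ (hyp_nonempty hH WH).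
move: (hpart_disj hP AP BP AB) => /disjP/(_ x); apply; apply/carrierP; exists W => //.
exact: (subsetP sAB).
Qed.

Lemma trivI_hyp H P : hypergraph H -> (forall B, B \in P -> B \subset H) ->
  (forall B1 B2, B1 \in P -> B2 \in P -> B1 != B2 -> [disjoint carrier B1 & carrier B2]) ->
  trivIset P.
Proof.
move=> hH sP dP; apply/trivIsetP=> B1 B2 B1P B2P ne; apply/disjP=> W W1 W2.
have WH : W \in H by apply: (subsetP (sP _ B1P)).
have [x xW] := set0Pn _ (hyp_nonempty hH WH).
by move: (dP _ _ B1P B2P ne) => /disjP/(_ x); apply; apply/carrierP; exists W.
Qed.

Lemma refine H P B A : hypergraph H -> hpartition H P -> B \in P -> A \subset B ->
  A != set0 -> A != B -> [disjoint carrier A & carrier (B :\: A)] ->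
  exists2 P', hpartition H P' & #|P| < #|P'|.
Proof.
move=> hH hP BP sAB A0 AB dA.
have BA0 : B :\: A != set0.
  move: (AB); apply: contra => /eqP e; rewrite eqEsubset sAB /=; apply/subsetP=> W WB.
  apply: contraT=> WA; have : W \in B :\: A by rewrite inE WA WB.
  by rewrite e inE.
have BAB : B :\: A != B.
  move: (A0); apply: contra => /eqP e; have [W WA] := set0Pn _ A0.
  have : W \in B :\: A by rewrite e (subsetP sAB).
  by rewrite inE WA.
have AnP := blk_notin hH hP BP sAB A0 AB.
have BAnP := blk_notin hH hP BP (subsetDl B A) BA0 BAB.
have ABA : A != B :\: A.
  move: (A0); apply: contra => /eqP e; rewrite -subset0; apply/subsetP=> W WA.
  by move: (WA); rewrite {1}e inE WA.
set P' := A |: ((B :\: A) |: (P :\ B)).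
exists P'; last first.
  rewrite /P' !cardsU1 in_setU1 negb_or ABA /= !in_setD1 (negbTE AnP) (negbTE BAnP) !andbF /=.
  by rewrite [in X in X < _](cardsD1 B P) BP.
have old_new : forall C (D : {set {set T}}), C \in P :\ B -> D \subset B -> [disjoint carrier C & carrier D].
  move=> C D; rewrite in_setD1 => /andP [CB CP] sDB.
  apply: disjointWr (carrierS sDB) _; exact: hpart_disj hP CP BP CB.
have dP' : forall B1 B2, B1 \in P' -> B2 \in P' -> B1 != B2 ->
    [disjoint carrier B1 & carrier B2].
  move=> B1 B2; rewrite !in_setU1.
  move=> /orP [/eqP-> | /orP [/eqP-> | o1]] /orP [/eqP-> | /orP [/eqP-> | o2]];
    rewrite ?eqxx // => ne.
  - by rewrite disjoint_sym; apply: old_new.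
  - by rewrite disjoint_sym.
  - by rewrite disjoint_sym; apply: old_new => //; apply: subsetDl.
  - exact: old_new.
  - by apply: old_new => //; apply: subsetDl.
  - move: o1 o2; rewrite !in_setD1 => /andP [_ P1] /andP [_ P2].
    exact: hpart_disj hP P1 P2 ne.
have sP' : forall C, C \in P' -> C \subset H.
  move=> C; rewrite !in_setU1 => /orP [/eqP-> | /orP [/eqP-> | o]].
  - exact: subset_trans sAB (hpart_sub hP BP).
  - exact: subset_trans (subsetDl _ _) (hpart_sub hP BP).
  - by move: o; rewrite in_setD1 => /andP [_ CP]; apply: hpart_sub hP CP.
apply: hpartitionI => //.
  rewrite /P' !coverE !carrierU1 setUA (setUD_sub sAB) -carrierU1 setD1K //.
  by case/andP: hP => /and3P [/eqP] .
- exact: trivI_hyp hH sP' dP'.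
- rewrite !in_setU1 !negb_or !(eq_sym set0) A0 BA0 /= in_setD1 negb_and.
  by rewrite (hpart_set0 hP) orbT.
Qed.

Lemma finest_exists H : hypergraph H -> ~~ connected H ->
  exists P, finest_hpartition H P /\ 1 < #|P|.
Proof.
move=> hH ncH.
case: (@arg_maxnP _ (T0 H) (hpartition H) (fun P => #|P|) (hpart_T0 H)) => P hP Pmax.
have fP : finest_hpartition H P.
  apply/andP; split => //; apply/forall_inP=> B BP; apply/connectedP=> A sAB dA.
  case: (A =P set0) => [->|/eqP A0]; first by left.
  case: (A =P B) => [->|/eqP AB]; first by right.
  have [P' hP' lt] := refine hH hP BP sAB A0 AB dA.
  have le : #|P'| <= #|P| := Pmax _ hP'.
  by move: lt; rewrite ltnNge le.
exists P; split => //; rewrite ltnNge; apply: contra ncH => le1.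
case/andP: (hP) => /and3P [/eqP cP _ _] _.
case: (set_0Vmem P) => [P0 | [B BP]].
  move: cP; rewrite P0 coverE carrier0 => <-.
  apply/connectedP=> A; rewrite subset0 => /eqP -> _; by left.
have /eqP eP : [set B] == P by rewrite eqEcard sub1set BP cards1.
move: cP; rewrite -eP cover1 => <-.
by case/andP: fP => _ /forall_inP; apply; rewrite -eP set11.
Qed.


Lemma blk_atomic H P B : atomic H -> hpartition H P -> B \in P -> atomic B.
Proof.
move=> /forall_inP aH hP BP; apply/forall_inP=> x xB.
have xH : x \in carrier H by apply: (subsetP (carrierS (hpart_sub hP BP))).
have [B' B'P xB'] := hpart_cover hP (aH x xH).
case: (B =P B') => [-> // | /eqP ne].
move: (hpart_disj hP BP B'P ne) => /disjP/(_ x xB); case.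
by apply/carrierP; exists [set x]; rewrite ?set11.
Qed.

Lemma blk_smaller H P B : hypergraph H -> hpartition H P -> B \in P -> 1 < #|P| ->
  #|carrier B| < #|carrier H|.
Proof.
move=> hH hP BP /card_gt1P [B1 [B2 [B1P B2P ne]]].
have [B' [B'P nB]] : exists B', B' \in P /\ B' != B.
  case: (B1 =P B) => [e|/eqP n1]; last by exists B1.
  by exists B2; split => //; rewrite -e eq_sym.
have B'0 : B' != set0 by apply: contraNneq (hpart_set0 hP) => <-.
have [W WB'] := set0Pn _ B'0.
have WH : W \in H by apply: (subsetP (hpart_sub hP B'P)).
have [y yW] := set0Pn _ (hyp_nonempty hH WH).
apply: proper_card; apply/properP; split; first by apply: carrierS (hpart_sub hP BP).
exists y; first by apply/carrierP; exists W.
have ne2 : B != B' by rewrite eq_sym.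
apply/negP=> yB; move: (hpart_disj hP BP B'P ne2) => /disjP/(_ y yB); apply.
by apply/carrierP; exists W.
Qed.

Lemma blk_contains H P F : hypergraph H -> hpartition H P -> nosplit F ->
  F \subset H -> F != set0 -> exists2 B, B \in P & F \subset B.
Proof.
move=> hH hP ns sFH F0.
have [Z ZF] := set0Pn _ F0.
have [B BP ZB] := hpart_cover hP (subsetP sFH Z ZF).
exists B => //.
have dA : [disjoint carrier (F :&: B) & carrier (F :\: (F :&: B))].
  apply/disjP=> x xA /carrierP [W]; rewrite !inE negb_and => /andP [nWA WF] xW.
  have [B' B'P WB'] := hpart_cover hP (subsetP sFH W WF).
  have ne : B != B'.
    by apply/negP => /eqP e; move: nWA; rewrite WF /= e WB'.
  move: (hpart_disj hP BP B'P ne) => /disjP/(_ x); apply.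
    by apply: (subsetP (carrierS (subsetIr F B))).
  by apply/carrierP; exists W.
case: (ns _ (subsetIl _ _) dA) => [e | e].
  have : Z \in F :&: B by rewrite inE ZF ZB.
  by rewrite e inE.
by rewrite -e subsetIr.
Qed.

Lemma carrier0_empty H : hypergraph H -> carrier H = set0 -> H = set0.
Proof.
move=> hH c0; apply/setP=> W; rewrite inE; apply/negP=> WH.
have := sub_carrier WH; rewrite c0 subset0 => /eqP W0.
by move: hH; rewrite /hypergraph -W0 WH.
Qed.

Lemma Dset0 X : ~ Dset set0 X.
Proof.
case=> X0 _; have -> : restrict set0 X = set0 by apply/setP=> W; rewrite restrictE inE.
rewrite carrier0 => e; by move: X0; rewrite -e eqxx.
Qed.

Lemma constr_complete n H : #|carrier H| <= n -> atomic H -> hypergraph H ->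
  (exists C, construction H C) /\
  (forall X, Dset H X -> exists2 C, construction H C & X \in C).
Proof.
elim: n H => [|n IH] H cn aH hH.
  have c0 : carrier H = set0 by apply/eqP; rewrite -cards_eq0 -leqn0.
  rewrite (carrier0_empty hH c0); split; first by exists set0; constructor.
  by move=> X /Dset0.
case: (carrier H =P set0) => [c0 | /eqP cH0].
  rewrite (carrier0_empty hH c0); split; first by exists set0; constructor.
  by move=> X /Dset0.
case: (boolP (connected H)) => cH.
  have step : forall x, x \in carrier H ->
      (exists K, construction (restrict H (carrier H :\ x)) K) /\
      (forall X, Dset (restrict H (carrier H :\ x)) X ->
         exists2 K, construction (restrict H (carrier H :\ x)) K & X \in K).
    move=> x xH; apply: IH.
    - have := cardsD1 x (carrier H); rewrite xH add1n => e.
      apply: leq_trans (subset_leq_card (carrier_restrict _ _)) _.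
      by rewrite -ltnS -e.
    - apply/forall_inP=> y /carrierP [W WR yW]; move: WR; rewrite !restrictE => /andP [WH sW].
      move/forall_inP: aH => /(_ y (subsetP (sub_carrier WH) y yW)) yH.
      by rewrite yH sub1set (subsetP sW).
    - exact: hyp_sub (restrict_sub _ _) hH.
  have [x0 x0H] := set0Pn _ cH0.
  have [[K0 cK0] _] := step x0 x0H.
  have ex : construction H (K0 :|: [set carrier H]) := constr_conn aH cH0 cH x0H cK0.
  split; first by exists (K0 :|: [set carrier H]).
  move=> X DX; case: (DX) => X0 ns cX.
  have sX : X \subset carrier H by rewrite -cX; apply: carrierS; apply: restrict_sub.
  case: (X =P carrier H) => [-> | /eqP nX].
    by exists (K0 :|: [set carrier H]); rewrite // in_setU set11 orbT.
  have [x xH xX] : exists2 x, x \in carrier H & x \notin X.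
    have : X \proper carrier H by rewrite properEneq nX sX.
    by case/properP=> _ [y yH yX]; exists y.
  have [_ h] := step x xH.
  have sX' : X \subset carrier H :\ x by rewrite subsetD1 sX xX.
  have DX' : Dset (restrict H (carrier H :\ x)) X by rewrite /Dset restrict_restrict.
  have [K cK XK] := h X DX'.
  exists (K :|: [set carrier H]); first exact: (constr_conn aH cH0 cH xH cK).
  by rewrite in_setU XK.
have [P [fP P1]] := finest_exists hH cH.
have hP : hpartition H P by case/andP: fP.
have IHB : forall B, B \in P -> (exists C, construction B C) /\
    (forall X, Dset B X -> exists2 C, construction B C & X \in C).
  move=> B BP; apply: IH.
  - by rewrite -ltnS; apply: leq_trans cn; apply: blk_smaller hH hP BP P1.
  - exact: blk_atomic aH hP BP.
  - exact: hyp_sub (hpart_sub hP BP) hH.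
have : forall B, exists K, B \in P -> construction B K.
  move=> B; case: (boolP (B \in P)) => BP; last by exists set0.
  by have [[K cK] _] := IHB B BP; exists K.
case/fin_all_exists=> Ks hKs.
split; first by exists (\bigcup_(B in P) Ks B); apply: constr_disc.
move=> X [X0 ns cX].
have F0 : restrict H X != set0 by apply: contraNneq X0 => e; rewrite -cX e carrier0.
have [B0 B0P sF] := blk_contains hH hP ns (restrict_sub _ _) F0.
have sX : X \subset carrier B0 by rewrite -cX; apply: carrierS.
have DX : Dset B0 X by rewrite /Dset -(blk_restrict hH hP B0P sX).
have [K0 cK0 XK0] := (IHB B0 B0P).2 X DX.
exists (\bigcup_(B in P) (if B == B0 then K0 else Ks B)).
  apply: constr_disc => // B BP; case: eqP => [-> // | _]; exact: hKs.
by apply/bigcupP; exists B0; rewrite ?eqxx.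
Qed.

End Aux.

Unset Implicit Arguments.

Theorem proposition4p8 (T : finType) (H : {set {set T}}) :
  hypergraph H -> atomic H ->
  (exists Hbar : {set {set T}}, saturated Hbar /\ cognate H Hbar) /\
  (forall Hbar : {set {set T}}, saturated Hbar -> cognate H Hbar ->
     forall X : {set T},
       X \in Hbar <-> exists C : {set {set T}}, construction H C /\ X \in C).
Proof.
move=> hH aH; split; first exact: (sat_exists (leqnn _) hH).
move=> Hb sHb cHb X.
have [hiff Diff] := cognate_Q cHb.
have hHb : hypergraph Hb := proj1 hiff hH.
apply: iff_trans (sat_D X hHb sHb) _.
apply: iff_trans (iff_sym (Diff hH X)) _.
have [_ comp] := constr_complete (leqnn _) aH hH.
split => [DX | [C [cC XC]]].
  by have [C cC XC] := comp X DX; exists C.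
exact: constr_sound cC hH X XC.
Qed.
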